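(* Let $G=(V,E)$ be a finite graph and $\varepsilon$ an orientation of $G$. The number of orientations of $G$ that are Eulerian equivalent to $\varepsilon$ equals the number of flows of $(G,\varepsilon)$ with values in $\{0,1\}$: \[\#[\varepsilon]=\bar\varphi_\varepsilon(G,1)=|\bar\Delta^+_{\mathrm{FL}}(G,\varepsilon)\cap\mathbb Z^E|.\]
   Context: An orientation assigns each edge (including loops) one of its two directions; $\varepsilon(v,e)=1$ ($-1$) if non-loop $e$ points out of (into) end-vertex $v$, $0$ otherwise. A flow of $(G,\varepsilon)$ with values in a set of reals is $f:E\to\mathbb R$ with $\sum_e m_{v,e}f(e)=0$ for all $v$, $m_{v,e}=\varepsilon(v,e)$ for non-loops and $0$ for loops. $\bar\Delta^+_{\mathrm{FL}}(G,\varepsilon)=\{f \text{ real flow}:0\le f(e)\le1\ \forall e\}$; $\bar\varphi_\varepsilon(G,q)$ is the number of integer flows with $0\le f(e)\le q$ for all $e$. $[\varepsilon]$ is the set of orientations Eulerian equivalent to $\varepsilon$, where two orientations are Eulerian equivalent if the spanning subgraph formed by the edges on which they differ is directed Eulerian (in-degree equals out-degree at each vertex, loops contributing one of each) with respect to either of them. *)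

(* Defs.v *)
From mathcomp Require Import all_boot all_order all_algebra.
Set Implicit Arguments. Unset Strict Implicit. Unset Printing Implicit Defensive.
Import GRing.Theory Num.Theory.
Local Open Scope ring_scope.

(* A finite graph (loops and multiple edges allowed): vertex set V, edge set E,
   each edge e has an (unordered) pair of end-vertices given by [ends e].
   An orientation assigns to each edge one of its two directions: o e = true
   means e is directed (ends e).1 -> (ends e).2, o e = false means the reverse.
   For a loop the two directions are distinct orientations as well. *)
Section Graph.
Variables (V E : finType) (ends : E -> V * V).

Definition orientation := {ffun E -> bool}.

Definition tail (o : orientation) (e : E) : V :=
  if o e then (ends e).1 else (ends e).2.
Definition head (o : orientation) (e : E) : V :=
  if o e then (ends e).2 else (ends e).1.

Definition is_loop (e : E) : bool := (ends e).1 == (ends e).2.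

Definition inc (o : orientation) (v : V) (e : E) : int :=
  if is_loop e then 0
  else ((tail o e == v)%:R - (head o e == v)%:R)%R.

Definition is_int_flow (o : orientation) (f : E -> int) : bool :=
  [forall v, \sum_(e : E) inc o v e * f e == 0].

Definition phibar (o : orientation) (q : nat) : nat :=
  #|[set f : {ffun E -> 'I_q.+1} | is_int_flow o (fun e => (val (f e))%:Z)]|.

(* the spanning subgraph with edge set D is directed Eulerian w.r.t. o:
   out-degree = in-degree at every vertex, a loop contributing one to each *)
Definition eulerian_on (o : orientation) (D : {set E}) : bool :=
  [forall v, #|[set e in D | tail o e == v]| == #|[set e in D | head o e == v]|].

Definition eulerian_equiv (o o' : orientation) : bool :=
  eulerian_on o [set e | o e != o' e].

Definition eclass (o : orientation) : {set orientation} :=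
  [set o' | eulerian_equiv o o'].
End Graph.

(* Main.v *)
Require Import Defs.
From mathcomp Require Import all_boot all_order all_algebra.
Import GRing.Theory Num.Theory.
Local Open Scope ring_scope.

Lemma inc_eq (V E : finType) (ends : E -> V * V) (o : orientation E) v e :
  Defs.inc ends o v e = ((Defs.tail ends o e == v)%:R - (Defs.head ends o e == v)%:R)%R.
Proof.
rewrite /inc; case: ifP => // /eqP L.
by rewrite /Defs.tail /Defs.head; case: (o e); rewrite L subrr.
Qed.

Lemma sum_ind (E : finType) (D : {set E}) (P : pred E) :
  (\sum_(e in D) ((P e)%:R : int) = #|[set e in D | P e]|%:R)%R.
Proof.
rewrite (big_mkcond (fun e => e \in D)) /=.
rewrite -sum1_card natr_sum [in RHS]big_mkcond /=.
by apply: eq_bigr => e _; rewrite inE; case: (e \in D); case: (P e).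
Qed.

Theorem proposition5p5 (V E : finType) (ends : E -> V * V)
    (eps : orientation E) :
  #|eclass ends eps| = phibar ends eps 1.
Proof.
pose g (o : orientation E) : {ffun E -> 'I_2} := [ffun e => inord (eps e != o e)].
have ginj : injective g.
  move=> o1 o2 /ffunP H; apply/ffunP => e; have := H e; rewrite !ffunE.
  move/(congr1 val); rewrite /= !inordK; last 2 first.
  - by case: (_ != _).
  - by case: (_ != _).
  by case: (eps e); case: (o1 e); case: (o2 e).
rewrite /eclass /phibar -(card_imset _ ginj); apply: eq_card => f; rewrite inE; apply/imsetP/idP.
- case=> o; rewrite inE /eulerian_equiv /eulerian_on => /forallP H ->.
  apply/forallP => v; have := H v.
  set D := [set e | eps e != o e].
  have -> : (\sum_e Defs.inc ends eps v e * (val (g o e))%:Z = \sum_(e in D) Defs.inc ends eps v e)%R.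
    rewrite (big_mkcond (fun e => e \in D)); apply: eq_bigr => e _.
    rewrite ffunE /= inordK; last by case: (_ != _).
    by rewrite inE; case: (_ != _); rewrite ?mulr1 ?mulr0.
  under eq_bigr do rewrite inc_eq.
  rewrite sumrB !sum_ind subr_eq0 => /eqP ->; by [].
- move=> /forallP H.
  pose o : orientation E := [ffun e => eps e (+) (val (f e) == 1%N)].
  have fo : forall e, val (f e) = (eps e != o e) :> nat.
    move=> e; rewrite ffunE; case: (f e) => [[|[|n]] //] /=; by case: (eps e).
  exists o; last first.
    apply/ffunP => e; rewrite ffunE; apply: val_inj.
    rewrite /g !ffunE /= inordK; last by case: (_ != _).
    by case: (f e) => [[|[|n]] //] /=; case: (eps e).
  rewrite inE /eulerian_equiv /eulerian_on; apply/forallP => v; have := H v.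
  set D := [set e | eps e != o e].
  have -> : (\sum_e Defs.inc ends eps v e * (val (f e))%:Z = \sum_(e in D) Defs.inc ends eps v e)%R.
    rewrite (big_mkcond (fun e => e \in D)); apply: eq_bigr => e _.
    by rewrite fo inE; case: (_ != _); rewrite ?mulr1 ?mulr0.
  under eq_bigr do rewrite inc_eq.
  by rewrite sumrB !sum_ind subr_eq0 => /eqP/eqP; rewrite eqr_nat.
Qed.
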